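(* Let $\mathbb{T}$ be a geometric theory over $\Sigma$. The topological groupoid $\mathbf{M}_{\mathbb{T}}=(I_{\mathbb{T}}\rightrightarrows M_{\mathbb{T}})$ of $\mathbb{S}$-indexed $\mathbb{T}$-models and isomorphisms is an open topological groupoid, i.e.\ the domain and codomain maps $d,c:I_{\mathbb{T}}\to M_{\mathbb{T}}$ are open maps.
   Context: Let $\Sigma$ be a single-sorted first-order signature with equality, $\kappa\geq|\Sigma|+\aleph_0$ an infinite cardinal, and $\mathbb{S}$ a fixed set of cardinality at least $\kappa$. An $\mathbb{S}$-indexed $\Sigma$-structure is one whose underlying set is a quotient $A/{\sim}$ of a subset $A\subseteq\mathbb{S}$ (elements $[a]$). $M_\Sigma$ is the set of all such structures and $I_\Sigma$ the set of all isomorphisms between them, with domain and codomain maps $d,c$. The logical topology on $M_\Sigma$ is the coarsest containing the sets $\{\mathbf{M}:[a]\in\mathbf{M}\}$ ($a\in\mathbb{S}$), $\{\mathbf{M}:[\mathbf{a}]\in R^{\mathbf{M}}\}$ (each $n$-ary relation symbol $R$ including equality and nullary symbols, $\mathbf{a}$ an $n$-tuple from $\mathbb{S}$), and $\{\mathbf{M}:f^{\mathbf{M}}([\mathbf{a}])=[b]\}$ (each function symbol $f$). The logical topology on $I_\Sigma$ is the coarsest making $d,c$ continuous and containing all $\{\mathbf{f}:[a]\in d(\mathbf{f}),[b]\in c(\mathbf{f}),\mathbf{f}([a])=[b]\}$. $M_{\mathbb{T}}\subseteq M_\Sigma$ is the set of $\mathbb{S}$-indexed $\mathbb{T}$-models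 and $I_{\mathbb{T}}\subseteq I_\Sigma$ the isomorphisms between them, with subspace topologies, forming a topological groupoid with composition, identities and inverses. *)

(* Defs.v *)
From Stdlib Require Import List Vectors.Fin.

Unset Implicit Arguments.
Unset Strict Implicit.

(* A single-sorted first-order signature (equality is built in). *)
Record signature := Signature {
  Rel : Type; rar : Rel -> nat;
  Fun : Type; far : Fun -> nat
}.

Definition injective {X Y : Type} (e : X -> Y) : Prop :=
  forall x y, e x = e y -> x = y.

Section Syntax.
Variable Σ : signature.

Inductive term : Type :=
| tvar : nat -> term
| tapp : forall f : Fun Σ, (Fin.t (far Σ f) -> term) -> term.

Inductive gformula : Type :=
| gtop : gformula
| geq : term -> term -> gformula
| grel : forall R : Rel Σ, (Fin.t (rar Σ R) -> term) -> gformula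
| gand : gformula -> gformula -> gformula
| gdisj : forall J : Type, (J -> gformula) -> gformula
| gex : nat -> gformula -> gformula.

Record gsequent := GSequent { sctx : list nat; shyp : gformula; sconcl : gformula }.

Fixpoint tfree (t : term) (x : nat) : Prop :=
  match t with
  | tvar n => n = x
  | tapp f ts => exists i, tfree (ts i) x
  end.

Fixpoint ffree (φ : gformula) (x : nat) : Prop :=
  match φ with
  | gtop => False
  | geq t u => tfree t x \/ tfree u x
  | grel R ts => exists i, tfree (ts i) x
  | gand φ ψ => ffree φ x \/ ffree ψ x
  | gdisj J φs => exists i, ffree (φs i) x
  | gex y φ => y <> x /\ ffree φ x
  end.

Definition geometric_theory (T : gsequent -> Prop) : Prop :=
  forall σ, T σ -> forall x, ffree (shyp σ) x \/ ffree (sconcl σ) x -> In x (sctx σ).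

End Syntax.

Arguments tvar {Σ}.
Arguments tapp {Σ}.
Arguments gtop {Σ}.
Arguments geq {Σ}.
Arguments grel {Σ}.
Arguments gand {Σ}.
Arguments gdisj {Σ}.
Arguments gex {Σ}.
Arguments sctx {Σ}.
Arguments shyp {Σ}.
Arguments sconcl {Σ}.
Arguments geometric_theory {Σ}.

Section Structures.
Variables (Σ : signature) (S : Type).

(* An S-indexed Σ-structure with underlying set A/~ (A ⊆ S).  Relations and
   (graphs of) functions on the quotient are encoded as ~-invariant
   predicates on representatives:  srel R a  iff [a] ∈ R^M,
   sfun f a b iff f^M([a]) = [b].  This encoding is bijective. *)
Record structure := Structure {
  sdom : S -> Prop;
  seqv : S -> S -> Prop;
  srel : forall R : Rel Σ, (Fin.t (rar Σ R) -> S) -> Prop;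
  sfun : forall f : Fun Σ, (Fin.t (far Σ f) -> S) -> S -> Prop;
  seqv_dom : forall a b, seqv a b -> sdom a /\ sdom b;
  seqv_refl : forall a, sdom a -> seqv a a;
  seqv_sym : forall a b, seqv a b -> seqv b a;
  seqv_trans : forall a b c, seqv a b -> seqv b c -> seqv a c;
  srel_dom : forall R a, srel R a -> forall i, sdom (a i);
  srel_inv : forall R a b, (forall i, seqv (a i) (b i)) -> srel R a -> srel R b;
  sfun_dom : forall f a b, sfun f a b -> (forall i, sdom (a i)) /\ sdom b;
  sfun_inv : forall f a a' b b', (forall i, seqv (a i) (a' i)) -> seqv b b' ->
               sfun f a b -> sfun f a' b';
  sfun_tot : forall f a, (forall i, sdom (a i)) -> exists b, sfun f a b;
  sfun_fun : forall f a b b', sfun f a b -> sfun f a b' -> seqv b b'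
}.

(* Isomorphisms M -> N; imap a b  iff  f([a]) = [b]. *)
Record iso := Iso {
  idom : structure;
  icod : structure;
  imap : S -> S -> Prop;
  imap_dom : forall a b, imap a b -> sdom idom a /\ sdom icod b;
  imap_inv : forall a a' b b', seqv idom a a' -> seqv icod b b' -> imap a b -> imap a' b';
  imap_tot : forall a, sdom idom a -> exists b, imap a b;
  imap_fun : forall a b b', imap a b -> imap a b' -> seqv icod b b';
  imap_inj : forall a a' b, imap a b -> imap a' b -> seqv idom a a';
  imap_sur : forall b, sdom icod b -> exists a, imap a b;
  imap_rel : forall R a b, (forall i, imap (a i) (b i)) ->
               (srel idom R a <-> srel icod R b);
  imap_fn : forall f a b x y, (forall i, imap (a i) (b i)) ->
               sfun idom f a x -> sfun icod f b y -> imap x y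
}.

Definition upd (v : nat -> S) (x : nat) (a : S) : nat -> S :=
  fun y => if Nat.eqb y x then a else v y.

(* teval M v t b  iff  [[t]]^M_v = [b] *)
Fixpoint teval (M : structure) (v : nat -> S) (t : term Σ) (b : S) : Prop :=
  match t with
  | tvar n => seqv M (v n) b
  | tapp f ts => exists a, (forall i, teval M v (ts i) (a i)) /\ sfun M f a b
  end.

Fixpoint sat (M : structure) (v : nat -> S) (φ : gformula Σ) : Prop :=
  match φ with
  | gtop => True
  | geq t u => exists b, teval M v t b /\ teval M v u b
  | grel R ts => exists a, (forall i, teval M v (ts i) (a i)) /\ srel M R a
  | gand φ ψ => sat M v φ /\ sat M v ψ
  | gdisj J φs => exists i, sat M v (φs i)
  | gex x φ => exists a, sdom M a /\ sat M (upd v x a) φ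
  end.

Definition sat_seq (M : structure) (σ : gsequent Σ) : Prop :=
  forall v : nat -> S, (forall x, In x (sctx σ) -> sdom M (v x)) ->
    sat M v (shyp σ) -> sat M v (sconcl σ).

Definition is_model (T : gsequent Σ -> Prop) (M : structure) : Prop :=
  forall σ, T σ -> sat_seq M σ.

Definition generated_open {X : Type} (B : (X -> Prop) -> Prop) (U : X -> Prop) : Prop :=
  forall x, U x -> exists l : list (X -> Prop),
    (forall V, In V l -> B V) /\ (forall V, In V l -> V x) /\
    (forall y, (forall V, In V l -> V y) -> U y).

Inductive M_subbasic : (structure -> Prop) -> Prop :=
| msb_elem : forall a : S, M_subbasic (fun M => sdom M a)
| msb_rel : forall (R : Rel Σ) (a : Fin.t (rar Σ R) -> S),
    M_subbasic (fun M => srel M R a)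
| msb_eq : forall a b : S, M_subbasic (fun M => sdom M a /\ sdom M b /\ seqv M a b)
| msb_fun : forall (f : Fun Σ) (a : Fin.t (far Σ f) -> S) (b : S),
    M_subbasic (fun M => sfun M f a b).

Definition M_open : (structure -> Prop) -> Prop := generated_open M_subbasic.

(* subbasis of the logical topology on I_Σ: coarsest making d, c continuous
   and containing the sets {f : [a] ∈ d f, [b] ∈ c f, f([a]) = [b]} *)
Inductive I_subbasic : (iso -> Prop) -> Prop :=
| isb_dom : forall U, M_open U -> I_subbasic (fun f => U (idom f))
| isb_cod : forall U, M_open U -> I_subbasic (fun f => U (icod f))
| isb_map : forall a b : S,
    I_subbasic (fun f => sdom (idom f) a /\ sdom (icod f) b /\ imap f a b).

Definition I_open : (iso -> Prop) -> Prop := generated_open I_subbasic.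

Definition MT (T : gsequent Σ -> Prop) := { M : structure | is_model T M }.
Definition IT (T : gsequent Σ -> Prop) :=
  { f : iso | is_model T (idom f) /\ is_model T (icod f) }.

Definition dT {T : gsequent Σ -> Prop} (f : IT T) : MT T :=
  exist _ (idom (proj1_sig f)) (proj1 (proj2_sig f)).
Definition cT {T : gsequent Σ -> Prop} (f : IT T) : MT T :=
  exist _ (icod (proj1_sig f)) (proj2 (proj2_sig f)).

Definition MT_open {T} (U : MT T -> Prop) : Prop :=
  exists V, M_open V /\ forall M : MT T, U M <-> V (proj1_sig M).
Definition IT_open {T} (U : IT T -> Prop) : Prop :=
  exists V, I_open V /\ forall f : IT T, U f <-> V (proj1_sig f).

Definition open_map {T} (g : IT T -> MT T) : Prop :=
  forall U : IT T -> Prop, IT_open U -> MT_open (fun M => exists f, U f /\ g f = M).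

End Structures.

Arguments dT {Σ S T}.
Arguments cT {Σ S T}.
Arguments open_map {Σ S T}.
Arguments MT_open {Σ S T}.
Arguments IT_open {Σ S T}.

(* Main.v *)
Require Import Defs.
From Stdlib Require Import Lia List Classical ClassicalEpsilon ProofIrrelevance FunctionalExtensionality PropExtensionality.
Import ListNotations.
Arguments idom {Σ S}. Arguments icod {Σ S}. Arguments imap {Σ S}.
Arguments sdom {Σ S}. Arguments seqv {Σ S}. Arguments srel {Σ S}. Arguments sfun {Σ S}.
Arguments teval {Σ S}. Arguments sat {Σ S}. Arguments is_model {Σ S}. Arguments sat_seq {Σ S}.
Arguments upd {S}.
Arguments seqv_dom {Σ S}. Arguments seqv_refl {Σ S}. Arguments seqv_sym {Σ S}. Arguments seqv_trans {Σ S}.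
Arguments srel_dom {Σ S}. Arguments srel_inv {Σ S}. Arguments sfun_dom {Σ S}. Arguments sfun_inv {Σ S}.
Arguments sfun_tot {Σ S}. Arguments sfun_fun {Σ S}.
Arguments imap_dom {Σ S}. Arguments imap_inv {Σ S}. Arguments imap_tot {Σ S}. Arguments imap_fun {Σ S}.
Arguments imap_inj {Σ S}. Arguments imap_sur {Σ S}. Arguments imap_rel {Σ S}. Arguments imap_fn {Σ S}.

Definition inv {Σ S} (f : iso Σ S) : iso Σ S.
Proof.
  refine (Iso Σ S (icod f) (idom f) (fun b a => imap f a b) _ _ _ _ _ _ _ _).
  - intros b a h. destruct (imap_dom f a b h); auto.
  - intros b b' a a' h1 h2 h3. exact (imap_inv f a a' b b' h2 h1 h3).
  - intros b h. exact (imap_sur f b h).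
  - intros b a a' h1 h2. exact (imap_inj f a a' b h1 h2).
  - intros b b' a h1 h2. exact (imap_fun f a b b' h1 h2).
  - intros a h. exact (imap_tot f a h).
  - intros R b a h. symmetry. apply (imap_rel f R a b h).
  - intros g b a x y h h1 h2. exact (imap_fn f g a b y x h h2 h1).
Defined.

Lemma choice_fin {S} (n : nat) (P : Fin.t n -> S -> Prop) :
  (forall i, exists y, P i y) -> exists g : Fin.t n -> S, forall i, P i (g i).
Proof.
  intros h. exists (fun i => proj1_sig (constructive_indefinite_description _ (h i))).
  intros i. exact (proj2_sig (constructive_indefinite_description _ (h i))).
Qed.

Lemma teval_dom {Σ S} (M : structure Σ S) v t b : teval M v t b -> sdom M b.
Proof.
  destruct t; simpl.
  - intros h. apply (seqv_dom M _ _ h).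
  - intros [a [_ h]]. apply (sfun_dom M _ _ _ h).
Qed.

Lemma teval_iso {Σ S} (g : iso Σ S) v w (t : term Σ) :
  (forall x, tfree Σ t x -> imap g (v x) (w x)) ->
  forall b b', teval (idom g) v t b -> imap g b b' -> teval (icod g) w t b'.
Proof.
  induction t as [n | f ts IH]; simpl; intros hv b b' h1 h2.
  - assert (hw := hv n eq_refl).
    assert (h3 : imap g b (w n)).
    { apply (imap_inv g (v n) b (w n) (w n) h1); [apply seqv_refl; apply (imap_dom g _ _ hw) | exact hw]. }
    exact (imap_fun g b (w n) b' h3 h2).
  - destruct h1 as [a [ha hf]].
    destruct (sfun_dom _ _ _ _ hf) as [hda _].
    destruct (choice_fin _ (fun i y => imap g (a i) y) (fun i => imap_tot g (a i) (hda i))) as [a' ha'].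
    assert (hda' : forall i, sdom (icod g) (a' i)) by (intros i; apply (imap_dom g _ _ (ha' i))).
    destruct (sfun_tot _ f a' hda') as [y hy].
    assert (hby : imap g b y) by exact (imap_fn g f a a' b y ha' hf hy).
    exists a'. split.
    + intros i. eapply (IH i); [intros x hx; apply hv; exists i; exact hx | apply ha | apply ha'].
    + apply (sfun_inv _ f a' a' y b'). intros i; apply seqv_refl; auto.
      exact (imap_fun g b y b' hby h2). exact hy.
Qed.

Lemma sat_iso {Σ S} (g : iso Σ S) (φ : gformula Σ) : forall v w,
  (forall x, ffree Σ φ x -> imap g (v x) (w x)) ->
  sat (idom g) v φ -> sat (icod g) w φ.
Proof.
  induction φ as [ | t u | R ts | φ IH1 ψ IH2 | J φs IH | x φ IH ]; simpl; intros v w hv h.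
  - auto.
  - destruct h as [b [h1 h2]].
    destruct (imap_tot g b (teval_dom _ _ _ _ h1)) as [b' hb'].
    exists b'. split.
    + eapply (teval_iso g v w t); [intros x hx; apply hv; auto | exact h1 | exact hb'].
    + eapply (teval_iso g v w u); [intros x hx; apply hv; auto | exact h2 | exact hb'].
  - destruct h as [a [ha hr]].
    destruct (choice_fin _ (fun i y => imap g (a i) y)
      (fun i => imap_tot g (a i) (teval_dom _ _ _ _ (ha i)))) as [a' ha'].
    exists a'. split.
    + intros i. eapply (teval_iso g v w (ts i)); [intros x hx; apply hv; exists i; auto | apply ha | apply ha'].
    + apply (proj1 (imap_rel g R a a' ha')). exact hr.
  - destruct h as [h1 h2]. split.
    + apply (IH1 v w); auto.
    + apply (IH2 v w); auto.
  - destruct h as [j hj]. exists j. apply (IH j v w); auto. intros x hx; apply hv; exists j; auto.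
  - destruct h as [a [ha hs]].
    destruct (imap_tot g a ha) as [a' ha'].
    exists a'. split. apply (imap_dom g _ _ ha').
    apply (IH (upd v x a) (upd w x a')); auto.
    intros y hy. unfold upd. destruct (Nat.eqb y x) eqn:E. exact ha'.
    apply hv. split; auto. intros ->. rewrite PeanoNat.Nat.eqb_refl in E. discriminate.
Qed.

Lemma model_iso {Σ S} (T : gsequent Σ -> Prop) (hT : geometric_theory T) (g : iso Σ S) :
  is_model T (idom g) -> is_model T (icod g).
Proof.
  intros hM σ hσ w hw hs.
  set (v := fun x => match excluded_middle_informative (sdom (icod g) (w x)) with
                     | left h => proj1_sig (constructive_indefinite_description _ (imap_sur g _ h))
                     | right _ => w x end).
  assert (hvw : forall x, In x (sctx σ) -> imap g (v x) (w x)).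
  { intros x hx. unfold v. destruct (excluded_middle_informative _) as [h|h].
    - exact (proj2_sig (constructive_indefinite_description _ (imap_sur g _ h))).
    - exfalso; auto. }
  apply (sat_iso g (sconcl σ) v w). intros x hx; apply hvw; apply (hT σ hσ); auto.
  apply (hM σ hσ).
  - intros x hx. apply (imap_dom g _ _ (hvw x hx)).
  - apply (sat_iso (inv g) (shyp σ) w v). intros x hx; apply hvw; apply (hT σ hσ); auto.
    exact hs.
Qed.

Lemma fresh_chain {S} (c : nat -> S) (hc : injective c) (l : list S) :
  forall N, exists j, N <= j /\ ~ In (c j) l.
Proof.
  induction l as [|b l IH]; intros N.
  - exists N; split; auto.
  - destruct (IH N) as [j [hj1 hj2]].
    destruct (classic (c j = b)) as [E|E].
    + destruct (IH (j + 1)) as [j' [h1 h2]]. exists j'. split; [lia|].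
      intros [h|h]; [|auto]. subst b. apply hc in h. lia.
    + exists j. split; auto. intros [h|h]; auto.
Qed.

Lemma avoid {S} (e : nat -> S) (he : injective e) (l : list S) :
  exists π : S -> S, injective π /\ (forall x, ~ In (π x) l) /\
    exists c : nat -> S, injective c /\ forall n x, c n <> π x.
Proof.
  induction l as [|b l IH].
  - set (σ := fun x => match excluded_middle_informative (exists n, x = e n) with
               | left h => e (2 * proj1_sig (constructive_indefinite_description _ h))
               | right _ => x end).
    exists σ. split; [|split].
    + intros x y. unfold σ.
      destruct (excluded_middle_informative (exists n, x = e n)) as [hx|hx];
      destruct (excluded_middle_informative (exists n, y = e n)) as [hy|hy].
      * destruct (constructive_indefinite_description _ hx) as [n hn];
        destruct (constructive_indefinite_description _ hy) as [m hm]; simpl.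
        intros h. apply he in h. assert (n = m) by lia. subst. reflexivity.
      * intros h. exfalso. apply hy. eauto.
      * intros h. exfalso. apply hx. eauto.
      * auto.
    + simpl; auto.
    + exists (fun n => e (2 * n + 1)). split.
      * intros n m h. apply he in h. lia.
      * intros n x. unfold σ. destruct (excluded_middle_informative (exists n, x = e n)) as [hx|hx].
        -- destruct (constructive_indefinite_description _ hx) as [m hm]; simpl.
           intros h. apply he in h. lia.
        -- intros h. apply hx. eauto.
  - destruct IH as [π [hπ [hl [c [hc hcπ]]]]].
    destruct (classic (exists x0, π x0 = b)) as [[x0 hx0]|hno].
    + destruct (fresh_chain c hc (b :: l) 0) as [j [_ hj]].
      set (π' := fun x => match excluded_middle_informative (x = x0) with
                 | left _ => c j | right _ => π x end).
      exists π'. split; [|split].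
      * intros x y. unfold π'.
        destruct (excluded_middle_informative (x = x0)) as [hx|hx];
        destruct (excluded_middle_informative (y = x0)) as [hy|hy]; try congruence.
        -- intros h. exfalso. apply (hcπ j y); auto.
        -- intros h. exfalso. apply (hcπ j x); auto.
        -- apply hπ.
      * intros x. unfold π'. destruct (excluded_middle_informative (x = x0)) as [hx|hx]; auto.
        intros [h|h]. apply hx. apply hπ. congruence. apply (hl x h).
      * exists (fun n => c (n + j + 1)). split.
        -- intros n m h. apply hc in h. lia.
        -- intros n x. unfold π'. destruct (excluded_middle_informative (x = x0)).
           ++ intros h; apply hc in h; lia.
           ++ apply hcπ.
    + exists π. split; [auto|split].
      * intros x [h|h]; [apply hno; eauto | apply (hl x h)].
      * exists c; auto.
Qed.

Section Build.
Context {Σ : signature} {S : Type} (M : structure Σ S) (Lb : list (S * S)) (π : S -> S)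
  (hπ : injective π) (hπL : forall x a, ~ In (a, π x) Lb)
  (hdom : forall a b, In (a, b) Lb -> sdom M a)
  (hcons : forall a a' b, In (a, b) Lb -> In (a', b) Lb -> seqv M a a').

Definition gg (x y : S) : Prop :=
  sdom M x /\ ((exists x', seqv M x x' /\ y = π x') \/ (exists a, In (a, y) Lb /\ seqv M x a)).

Lemma gg_inj x x' y : gg x y -> gg x' y -> seqv M x x'.
Proof.
  intros [_ [[u [hu ->]]|[a [ha hxa]]]] [_ [[u' [hu' E]]|[a' [ha' hxa']]]].
  - apply hπ in E. subst. eapply seqv_trans; [exact hu| apply seqv_sym; exact hu'].
  - exfalso. eapply hπL; exact ha'.
  - subst. exfalso. eapply hπL; exact ha.
  - eapply seqv_trans; [exact hxa|]. eapply seqv_trans; [apply (hcons a a' y ha ha')|].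
    apply seqv_sym; exact hxa'.
Qed.

Lemma gg_resp x x' y : gg x y -> seqv M x x' -> gg x' y.
Proof.
  intros [_ [[u [hu E]]|[a [ha hxa]]]] h; split; try apply (seqv_dom M _ _ h).
  - left. exists u. split; auto. eapply seqv_trans; [apply seqv_sym; exact h| exact hu].
  - right. exists a. split; auto. eapply seqv_trans; [apply seqv_sym; exact h| exact hxa].
Qed.

Lemma gg_dom x y : gg x y -> sdom M x.
Proof. intros [h _]; exact h. Qed.

Lemma gg_tot x : sdom M x -> gg x (π x).
Proof. intros h. split; auto. left. exists x. split; auto. apply seqv_refl; auto. Qed.

Definition Ndom y := exists x, gg x y.
Definition Neqv y y' := exists x x', gg x y /\ gg x' y' /\ seqv M x x'.
Definition Nrel (R : Rel Σ) (yv : Fin.t (rar Σ R) -> S) :=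
  exists xv, (forall i, gg (xv i) (yv i)) /\ srel M R xv.
Definition Nfun (f : Fun Σ) (yv : Fin.t (far Σ f) -> S) (y : S) :=
  exists xv x, (forall i, gg (xv i) (yv i)) /\ gg x y /\ sfun M f xv x.

Lemma Neqv_gg y y' x : Neqv y y' -> gg x y -> gg x y'.
Proof.
  intros [u [u' [h1 [h2 h3]]]] hx.
  apply (gg_resp u'); auto.
  eapply seqv_trans; [apply seqv_sym; exact h3|]. exact (gg_inj _ _ _ h1 hx).
Qed.

Definition Nstr : structure Σ S.
Proof.
  refine (Structure Σ S Ndom Neqv Nrel Nfun _ _ _ _ _ _ _ _ _ _).
  - intros a b [x [x' [h1 [h2 _]]]]. split; [exists x|exists x']; auto.
  - intros a [x hx]. exists x, x. refine (conj _ (conj _ _)); auto. apply seqv_refl; apply (gg_dom _ _ hx).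
  - intros a b [x [x' [h1 [h2 h3]]]]. exists x', x. refine (conj _ (conj _ _)); auto. apply seqv_sym; auto.
  - intros a b c [x [x' [h1 [h2 h3]]]] [u [u' [k1 [k2 k3]]]]. exists x, u'. refine (conj _ (conj _ _)); auto.
    eapply seqv_trans; [exact h3|]. eapply seqv_trans; [apply (gg_inj _ _ _ h2 k1)|exact k3].
  - intros R a [xv [h _]] i. exists (xv i); auto.
  - intros R a b hab [xv [h1 h2]]. exists xv. split; auto. intros i. apply (Neqv_gg (a i)); auto.
  - intros f a b [xv [x [h1 [h2 _]]]]. split; [intros i; exists (xv i); auto | exists x; auto].
  - intros f a a' b b' ha hb [xv [x [h1 [h2 h3]]]]. exists xv, x. refine (conj _ (conj _ _)); auto.
    intros i; apply (Neqv_gg (a i)); auto. apply (Neqv_gg b); auto.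
  - intros f a ha. destruct (choice_fin _ (fun i x => gg x (a i)) ha) as [xv hxv].
    destruct (sfun_tot M f xv) as [x hx]. intros i; apply (gg_dom _ _ (hxv i)).
    exists (π x). exists xv, x. refine (conj _ (conj _ _)); auto. apply gg_tot. apply (sfun_dom M _ _ _ hx).
  - intros f a b b' [xv [x [h1 [h2 h3]]]] [xv' [x' [k1 [k2 k3]]]]. exists x, x'. refine (conj _ (conj _ _)); auto.
    apply (sfun_fun M f xv x x'); auto. eapply (sfun_inv M f xv' xv x' x'); [| |exact k3].
    intros i; exact (gg_inj _ _ _ (k1 i) (h1 i)). apply seqv_refl. apply (gg_dom _ _ k2).
Defined.

Definition Niso : iso Σ S.
Proof.
  refine (Iso Σ S M Nstr gg _ _ _ _ _ _ _ _).
  - intros a b h. split. apply (gg_dom _ _ h). exists a; auto.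
  - intros a a' b b' h1 h2 h3. apply (gg_resp a); auto. apply (Neqv_gg b); auto.
  - intros a h. exists (π a). apply gg_tot; auto.
  - intros a b b' h1 h2. exists a, a. refine (conj _ (conj _ _)); auto. apply seqv_refl; apply (gg_dom _ _ h1).
  - intros a a' b h1 h2. exact (gg_inj _ _ _ h1 h2).
  - intros b h. exact h.
  - intros R a b h. split.
    + intros hr. exists a. auto.
    + intros [xv [h1 h2]]. apply (srel_inv M R xv a); auto. intros i; exact (gg_inj _ _ _ (h1 i) (h i)).
  - intros f a b x y h hx [xv [x0 [h1 [h2 h3]]]].
    apply (gg_resp x0); auto. apply (sfun_fun M f a x0 x); auto.
    apply (sfun_inv M f xv a x0 x0); auto. intros i; exact (gg_inj _ _ _ (h1 i) (h i)).
    apply seqv_refl. apply (gg_dom _ _ h2).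
Defined.

Lemma Niso_labels a b : In (a, b) Lb -> imap Niso a b.
Proof. intros h. simpl. split. eapply hdom; eauto. right. exists a. split; auto.
  apply seqv_refl. eapply hdom; eauto. Qed.

End Build.

Arguments M_subbasic {Σ S}. Arguments I_subbasic {Σ S}. Arguments M_open {Σ S}. Arguments I_open {Σ S}.

Fixpoint fin_enum (n : nat) : list (Fin.t n) :=
  match n with 0 => [] | Datatypes.S m => Fin.F1 :: map Fin.FS (fin_enum m) end.

Lemma fin_enum_all n (i : Fin.t n) : In i (fin_enum n).
Proof. induction i; simpl; [left; auto | right; apply in_map; auto]. Qed.

Definition labs {S} n (av bv : Fin.t n -> S) : list (S * S) :=
  map (fun i => (av i, bv i)) (fin_enum n).

Lemma labs_in {S} n (av bv : Fin.t n -> S) a b : In (a, b) (labs n av bv) -> exists i, a = av i /\ b = bv i.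
Proof. unfold labs. intros h. apply in_map_iff in h. destruct h as [i [h _]]. inversion h; eauto. Qed.

Lemma labs_all {S} n (av bv : Fin.t n -> S) i : In (av i, bv i) (labs n av bv).
Proof. unfold labs. apply (in_map (fun i => (av i, bv i))). apply fin_enum_all. Qed.

Definition Good {Σ S} (f0 : iso Σ S) (lc : list (structure Σ S -> Prop)) (Lb : list (S * S)) :=
  (forall V, In V lc -> M_subbasic V) /\ (forall V, In V lc -> V (idom f0)) /\
  (forall a b, In (a, b) Lb -> imap f0 a b) /\
  (forall M', (forall V, In V lc -> V M') -> forall a b, In (a, b) Lb -> sdom M' a).

Lemma Good_app {Σ S} f0 lc1 Lb1 lc2 Lb2 : @Good Σ S f0 lc1 Lb1 -> Good f0 lc2 Lb2 -> Good f0 (lc1 ++ lc2) (Lb1 ++ Lb2).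
Proof.
  intros [h1 [h2 [h3 h4]]] [k1 [k2 [k3 k4]]]. split; [|split; [|split]].
  - intros V hV; apply in_app_or in hV; destruct hV as [hV|hV]; [apply h1|apply k1]; exact hV.
  - intros V hV; apply in_app_or in hV; destruct hV as [hV|hV]; [apply h2|apply k2]; exact hV.
  - intros a b hV; apply in_app_or in hV; destruct hV as [hV|hV]; [apply h3|apply k3]; exact hV.
  - intros M' hM a b hV; apply in_app_or in hV; destruct hV.
    + eapply h4; eauto. intros V hV; apply hM, in_or_app; auto.
    + eapply k4; eauto. intros V hV; apply hM, in_or_app; auto.
Qed.

Lemma Nside {Σ S} (f0 : iso Σ S) (l : list (structure Σ S -> Prop)) :
  (forall V, In V l -> M_subbasic V) -> (forall V, In V l -> V (icod f0)) ->
  exists lc Lb, Good f0 lc Lb /\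
    forall f' : iso Σ S, (forall V, In V lc -> V (idom f')) -> (forall a b, In (a, b) Lb -> imap f' a b) ->
      forall V, In V l -> V (icod f').
Proof.
  induction l as [|V l IH]; intros hs hv.
  - exists [], []. split. split; [|split; [|split]]; simpl; tauto. simpl; tauto.
  - destruct IH as [lc [Lb [hG hf]]]. intros; apply hs; simpl; auto. intros; apply hv; simpl; auto.
    assert (hV : V (icod f0)) by (apply hv; simpl; auto).
    assert (hsV : M_subbasic V) by (apply hs; simpl; auto).
    assert (H : exists lc1 Lb1, Good f0 lc1 Lb1 /\ forall f' : iso Σ S,
      (forall V, In V lc1 -> V (idom f')) -> (forall a b, In (a, b) Lb1 -> imap f' a b) -> V (icod f')).
    { clear hf hG. destruct hsV as [b | R bv | b b' | g bv c]; simpl in hV.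
      - destruct (imap_sur f0 b hV) as [a ha].
        exists [fun M => sdom M a], [(a, b)]. split.
        + split; [|split; [|split]]; simpl.
          * intros V [<-|[]]. constructor.
          * intros V [<-|[]]. apply (imap_dom f0 _ _ ha).
          * intros a' b' [E|[]]; inversion E; subst; auto.
          * intros M' hM a' b' [E|[]]; inversion E; subst. apply (hM _ (or_introl eq_refl)).
        + intros f' _ hl. apply (imap_dom f' a b). apply hl; simpl; auto.
      - destruct (choice_fin _ (fun i a => imap f0 a (bv i))
          (fun i => imap_sur f0 (bv i) (srel_dom _ R bv hV i))) as [av hav].
        exists [fun M => srel M R av], (labs _ av bv). split.
        + split; [|split; [|split]]; simpl.
          * intros V [<-|[]]. constructor.
          * intros V [<-|[]]. apply (proj2 (imap_rel f0 R av bv hav)). exact hV.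
          * intros a b h. destruct (labs_in _ _ _ _ _ h) as [i [-> ->]]. auto.
          * intros M' hM a b h. destruct (labs_in _ _ _ _ _ h) as [i [-> ->]].
            apply (srel_dom M' R av). apply (hM _ (or_introl eq_refl)).
        + intros f' hd hl. apply (proj1 (imap_rel f' R av bv (fun i => hl _ _ (labs_all _ av bv i)))).
          apply (hd _ (or_introl eq_refl)).
      - destruct hV as [hb [hb' he]].
        destruct (imap_sur f0 b hb) as [a ha]. destruct (imap_sur f0 b' hb') as [a' ha'].
        exists [fun M => sdom M a /\ sdom M a' /\ seqv M a a'], [(a, b); (a', b')]. split.
        + split; [|split; [|split]]; simpl.
          * intros V [<-|[]]. constructor.
          * intros V [<-|[]]. split; [apply (imap_dom f0 _ _ ha)|split; [apply (imap_dom f0 _ _ ha')|]].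
            apply (imap_inj f0 a a' b ha). apply (imap_inv f0 a' a' b' b); auto.
            apply seqv_refl; apply (imap_dom f0 _ _ ha'). apply seqv_sym; auto.
          * intros x y [E|[E|[]]]; inversion E; subst; auto.
          * intros M' hM x y [E|[E|[]]]; inversion E; subst; apply (hM _ (or_introl eq_refl)).
        + intros f' hd hl. destruct (hd _ (or_introl eq_refl)) as [_ [_ he']].
          assert (h1 : imap f' a b) by (apply hl; simpl; auto).
          assert (h2 : imap f' a' b') by (apply hl; simpl; auto).
          split; [apply (imap_dom f' _ _ h1)|split; [apply (imap_dom f' _ _ h2)|]].
          apply (imap_fun f' a' b b'); auto.
          apply (imap_inv f' a a' b b); auto. apply seqv_refl; apply (imap_dom f' _ _ h1).
      - destruct (sfun_dom _ g bv c hV) as [hbv hc].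
        destruct (choice_fin _ (fun i a => imap f0 a (bv i))
          (fun i => imap_sur f0 (bv i) (hbv i))) as [av hav].
        destruct (imap_sur f0 c hc) as [ac hac].
        assert (hM : sfun (idom f0) g av ac).
        { destruct (sfun_tot _ g av (fun i => proj1 (imap_dom f0 _ _ (hav i)))) as [y hy].
          assert (hyc : imap f0 y c) by exact (imap_fn f0 g av bv y c hav hy hV).
          apply (sfun_inv _ g av av y ac); auto. intros i; apply seqv_refl; apply (imap_dom f0 _ _ (hav i)).
          apply (imap_inj f0 y ac c); auto. }
        exists [fun M => sfun M g av ac], ((ac, c) :: labs _ av bv). split.
        + split; [|split; [|split]]; simpl.
          * intros V [<-|[]]. constructor.
          * intros V [<-|[]]. exact hM.
          * intros a b [E|h]. inversion E; subst; auto. destruct (labs_in _ _ _ _ _ h) as [i [-> ->]]. auto.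
          * intros M' hM' a b [E|h]; specialize (hM' _ (or_introl eq_refl)); simpl in hM';
            destruct (sfun_dom _ _ _ _ hM') as [h1 h2].
            inversion E; subst; auto. destruct (labs_in _ _ _ _ _ h) as [i [-> ->]]. auto.
        + intros f' hd hl. assert (hs' := hd _ (or_introl eq_refl)). simpl in hs'.
          assert (hl' := fun i => hl _ _ (or_intror (labs_all _ av bv i))).
          assert (hac' : imap f' ac c) by (apply hl; simpl; auto).
          destruct (sfun_tot (icod f') g bv (fun i => proj2 (imap_dom f' _ _ (hl' i)))) as [y hy].
          assert (h := imap_fn f' g av bv ac y hl' hs' hy).
          apply (sfun_inv _ g bv bv y c); auto. intros i; apply seqv_refl; apply (imap_dom f' _ _ (hl' i)).
          apply (imap_fun f' ac y c); auto. }
    destruct H as [lc1 [Lb1 [hG1 hf1]]].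
    exists (lc1 ++ lc), (Lb1 ++ Lb). split. apply Good_app; auto.
    intros f' hd hl V' [<-|hV'].
    + apply hf1. intros; apply hd, in_or_app; auto. intros; apply hl, in_or_app; auto.
    + apply hf; auto. intros; apply hd, in_or_app; auto. intros; apply hl, in_or_app; auto.
Qed.


Lemma Dside {Σ S} (f0 : iso Σ S) (l : list (iso Σ S -> Prop)) :
  (forall V, In V l -> I_subbasic V) -> (forall V, In V l -> V f0) ->
  exists lc Lb, Good f0 lc Lb /\
    forall f' : iso Σ S, (forall V, In V lc -> V (idom f')) -> (forall a b, In (a, b) Lb -> imap f' a b) ->
      forall V, In V l -> V f'.
Proof.
  induction l as [|V l IH]; intros hs hv.
  - exists [], []. split. split; [|split; [|split]]; simpl; tauto. simpl; tauto.
  - destruct IH as [lc [Lb [hG hf]]]. intros; apply hs; simpl; auto. intros; apply hv; simpl; auto.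
    assert (hV : V f0) by (apply hv; simpl; auto).
    assert (hsV : I_subbasic V) by (apply hs; simpl; auto).
    assert (H : exists lc1 Lb1, Good f0 lc1 Lb1 /\ forall f' : iso Σ S,
      (forall V, In V lc1 -> V (idom f')) -> (forall a b, In (a, b) Lb1 -> imap f' a b) -> V f').
    { clear hf hG. destruct hsV as [U hU | U hU | a b]; simpl in hV.
      - destruct (hU _ hV) as [l0 [h1 [h2 h3]]].
        exists l0, []. split.
        + split; [|split; [|split]]; simpl; auto; tauto.
        + intros f' hd _. apply h3. exact hd.
      - destruct (hU _ hV) as [l0 [h1 [h2 h3]]].
        destruct (Nside f0 l0 h1 h2) as [lc1 [Lb1 [hG1 hf1]]].
        exists lc1, Lb1. split; auto. intros f' hd hl. apply h3. apply hf1; auto.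
      - destruct hV as [ha [hb hab]].
        exists [fun M => sdom M a], [(a, b)]. split.
        + split; [|split; [|split]]; simpl.
          * intros V [<-|[]]. constructor.
          * intros V [<-|[]]. exact ha.
          * intros a' b' [E|[]]; inversion E; subst; auto.
          * intros M' hM a' b' [E|[]]; inversion E; subst. apply (hM _ (or_introl eq_refl)).
        + intros f' _ hl. assert (h : imap f' a b) by (apply hl; simpl; auto).
          destruct (imap_dom f' _ _ h). auto. }
    destruct H as [lc1 [Lb1 [hG1 hf1]]].
    exists (lc1 ++ lc), (Lb1 ++ Lb). split. apply Good_app; auto.
    intros f' hd hl V' [<-|hV'].
    + apply hf1. intros; apply hd, in_or_app; auto. intros; apply hl, in_or_app; auto.
    + apply hf; auto. intros; apply hd, in_or_app; auto. intros; apply hl, in_or_app; auto.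
Qed.

Definition consl {Σ S} (Lb : list (S * S)) : list (structure Σ S -> Prop) :=
  flat_map (fun pq : (S * S) * (S * S) =>
    if excluded_middle_informative (snd (fst pq) = snd (snd pq))
    then [fun M : structure Σ S => sdom M (fst (fst pq)) /\ sdom M (fst (snd pq)) /\ seqv M (fst (fst pq)) (fst (snd pq))]
    else []) (list_prod Lb Lb).

Lemma consl_sub {Σ S} (Lb : list (S * S)) V : In V (@consl Σ S Lb) -> M_subbasic V.
Proof.
  unfold consl. intros h. apply in_flat_map in h. destruct h as [pq [_ h]].
  destruct (excluded_middle_informative _); simpl in h; [destruct h as [<-|[]]; constructor | destruct h].
Qed.

Lemma consl_at {Σ S} (f0 : iso Σ S) Lb : (forall a b, In (a, b) Lb -> imap f0 a b) ->
  forall V, In V (consl Lb) -> V (idom f0).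
Proof.
  unfold consl. intros hL V h. apply in_flat_map in h. destruct h as [[[a b] [a' b']] [hin h]].
  apply in_prod_iff in hin. destruct hin as [h1 h2]. simpl in h.
  destruct (excluded_middle_informative _) as [E|E]; simpl in h; [|destruct h].
  destruct h as [<-|[]]. subst. apply hL in h1. apply hL in h2.
  split; [apply (imap_dom f0 _ _ h1)|split; [apply (imap_dom f0 _ _ h2)|]].
  apply (imap_inj f0 a a' b'); auto.
Qed.

Lemma consl_use {Σ S} (M : structure Σ S) Lb : (forall V, In V (consl Lb) -> V M) ->
  forall a a' b, In (a, b) Lb -> In (a', b) Lb -> seqv M a a'.
Proof.
  intros hM a a' b h1 h2.
  assert (hin : In ((a, b), (a', b)) (list_prod Lb Lb)) by (apply in_prod; auto).
  assert (hV : In (fun M : structure Σ S => sdom M a /\ sdom M a' /\ seqv M a a') (consl Lb)).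
  { unfold consl. apply in_flat_map. exists ((a, b), (a', b)). split; auto. simpl.
    destruct (excluded_middle_informative (b = b)) as [_|E]; [left; auto| exfalso; auto]. }
  apply hM in hV. apply hV.
Qed.


Lemma MT_eq {Σ S T} (M N : MT Σ S T) : proj1_sig M = proj1_sig N -> M = N.
Proof. destruct M, N; simpl; intros ->. f_equal. apply proof_irrelevance. Qed.

Lemma d_open {Σ S} (e : nat -> S) (he : injective e) (T : gsequent Σ -> Prop) (hT : geometric_theory T) :
  open_map (@dT Σ S T).
Proof.
  intros U [V [hV hUV]].
  exists (fun M => exists f : iso Σ S, V f /\ idom f = M /\ (is_model T M -> is_model T (icod f))).
  split.
  - intros M0 [f0 [hVf [<- himp]]].
    destruct (hV f0 hVf) as [l [hl1 [hl2 hl3]]].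
    destruct (Dside f0 l hl1 hl2) as [lc [Lb [[g1 [g2 [g3 g4]]] hf]]].
    exists (lc ++ consl Lb). split; [|split].
    + intros W hW. apply in_app_or in hW. destruct hW as [hW|hW]. apply g1; exact hW. apply (consl_sub Lb); exact hW.
    + intros W hW. apply in_app_or in hW. destruct hW as [hW|hW]. apply g2; exact hW. apply (consl_at f0 Lb g3); exact hW.
    + intros M' hM'.
      assert (hlc : forall W, In W lc -> W M') by (intros W hW; apply hM', in_or_app; auto).
      assert (hcl : forall W, In W (consl Lb) -> W M') by (intros W hW; apply hM', in_or_app; auto).
      destruct (avoid e he (map snd Lb)) as [π [hπ [hπL _]]].
      assert (hπL' : forall x a, ~ In (a, π x) Lb).
      { intros x a h. apply (hπL x). apply (in_map snd) in h. exact h. }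
      set (f' := Niso M' Lb π hπ hπL' (consl_use M' Lb hcl)).
      exists f'. split; [|split].
      * apply hl3. apply hf. exact hlc. intros a b h. apply (Niso_labels M' Lb π hπ hπL' (g4 M' hlc) (consl_use M' Lb hcl)). exact h.
      * reflexivity.
      * intros hm. apply (model_iso T hT f'). exact hm.
  - intros [M hM]. simpl. split.
    + intros [[f [hd hc]] [hU hE]]. apply hUV in hU. simpl in hU.
      apply (f_equal (@proj1_sig _ _)) in hE. simpl in hE.
      exists f. split; auto.
    + intros [f [hVf [hE himp]]]. subst M.
      exists (exist _ f (conj hM (himp hM))). split.
      * apply hUV. exact hVf.
      * apply MT_eq. reflexivity.
Qed.


Lemma iso_ext {Σ S} (g h : iso Σ S) : idom g = idom h -> icod g = icod h -> imap g = imap h -> g = h.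
Proof.
  destruct g, h; simpl; intros E1 E2 E3. subst. f_equal; apply proof_irrelevance.
Qed.

Lemma inv_inv {Σ S} (g : iso Σ S) : inv (inv g) = g.
Proof. apply iso_ext; reflexivity. Qed.

Definition invT {Σ S T} (f : IT Σ S T) : IT Σ S T :=
  exist _ (inv (proj1_sig f)) (conj (proj2 (proj2_sig f)) (proj1 (proj2_sig f))).

Lemma IT_eq {Σ S T} (f g : IT Σ S T) : proj1_sig f = proj1_sig g -> f = g.
Proof. destruct f, g; simpl; intros ->. f_equal. apply proof_irrelevance. Qed.

Lemma I_open_inv {Σ S} (V : iso Σ S -> Prop) : I_open V -> I_open (fun f => V (inv f)).
Proof.
  intros hV x hx. destruct (hV _ hx) as [l [h1 [h2 h3]]].
  exists (map (fun W => fun f => W (inv f)) l). split; [|split].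
  - intros W' hW'. apply in_map_iff in hW'. destruct hW' as [W [<- hW]].
    destruct (h1 W hW) as [U hU | U hU | a b].
    + exact (isb_cod _ _ U hU).
    + exact (isb_dom _ _ U hU).
    + replace (fun f : iso Σ S => (fun f0 : iso Σ S => sdom (idom f0) a /\ sdom (icod f0) b /\ imap f0 a b) (inv f))
        with (fun f : iso Σ S => sdom (idom f) b /\ sdom (icod f) a /\ imap f b a).
      constructor.
      apply functional_extensionality; intros f. apply propositional_extensionality. simpl. tauto.
  - intros W' hW'. apply in_map_iff in hW'. destruct hW' as [W [<- hW]]. apply h2; auto.
  - intros y hy. apply h3. intros W hW. apply (hy (fun f => W (inv f))). apply (in_map (fun W => fun f => W (inv f))). auto.
Qed.

Lemma MT_open_ext {Σ S T} (W W' : MT Σ S T -> Prop) : MT_open W -> (forall M, W M <-> W' M) -> MT_open W'.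
Proof. intros [V [h1 h2]] h. exists V. split; auto. intros M. rewrite <- h2. split; apply h. Qed.

Lemma c_open {Σ S} (e : nat -> S) (he : injective e) (T : gsequent Σ -> Prop) (hT : geometric_theory T) :
  open_map (@cT Σ S T).
Proof.
  intros U [V [hV hUV]].
  assert (hU' : IT_open (fun f => U (invT f))).
  { exists (fun f => V (inv f)). split. apply I_open_inv; auto. intros f. apply hUV. }
  apply (MT_open_ext _ _ (d_open e he T hT _ hU')).
  intros M. split.
  - intros [f [hf E]]. exists (invT f). split; auto. rewrite <- E. apply MT_eq. reflexivity.
  - intros [f [hf E]]. exists (invT f). split.
    + replace (invT (invT f)) with f; auto. apply IT_eq. simpl. symmetry. apply inv_inv.
    + rewrite <- E. apply MT_eq. reflexivity.
Qed.

Theorem proposition2p8 (Σ : signature) (κ S : Type)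
  (hκ_inf : exists e : nat -> κ, injective e)
  (hκ_sig : exists e : Rel Σ + Fun Σ -> κ, injective e)
  (hS : exists e : κ -> S, injective e)
  (T : gsequent Σ -> Prop) (hT : geometric_theory T) :
  open_map (@dT Σ S T) /\ open_map (@cT Σ S T).
Proof.
  destruct hκ_inf as [e1 h1]. destruct hS as [e2 h2].
  assert (he : injective (fun n => e2 (e1 n))) by (intros x y h; apply h1, h2, h).
  split; [apply (d_open _ he T hT) | apply (c_open _ he T hT)].
Qed.
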